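(* Let $\sigma\ge0$, $\gamma>0$, $V=\sqrt{1+\sigma}$, let $(n^\varepsilon,u^\varepsilon,\phi^\varepsilon)$ be the solitary wave solution and $\phi_R^\varepsilon=\phi^\varepsilon-\varepsilon n_{\mathrm{KdV}}$. There is $\varepsilon_1>0$ such that for every fixed $\xi_*>0$ there exists a constant $C_{\xi_*}>0$ (independent of $\varepsilon$, depending on $\xi_*$) with \[ \sup_{\xi\in[0,\xi_*]}\big(|(\phi_R^\varepsilon)'(\xi)|^2+|\phi_R^\varepsilon(\xi)|^2\big)\le C_{\xi_*}\varepsilon^4\qquad\text{for all }0<\varepsilon<\varepsilon_1. \]
   Context: For $\varepsilon>0$, consider the system in $\xi\in\mathbb{R}$: $-(V+\gamma\varepsilon)n'+(nu)'=0$, $-(V+\gamma\varepsilon)u'+uu'+\sigma n'/n=-\phi'$, $\varepsilon\phi''=e^\phi-n$, with $n\to1,u\to0,\phi\to0$ as $|\xi|\to\infty$. With $V=\sqrt{1+\sigma}$, for all sufficiently small $\varepsilon>0$ it has a non-trivial smooth solution unique up to translation; the ''solitary wave solution'' $(n^\varepsilon,u^\varepsilon,\phi^\varepsilon)$ is the translate that is even in $\xi$ and has all components strictly decreasing on $(0,\infty)$. Here $n_{\mathrm{KdV}}(\xi)=\frac{3\gamma}{V}\operatorname{sech}^2(\sqrt{V\gamma/2}\,\xi)$. *)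

(* Defs.v *)
From Stdlib Require Import Reals.
From Coquelicot Require Import Coquelicot.
Open Scope R_scope.

Definition smooth (f : R -> R) : Prop := forall (k : nat) (x : R), ex_derive_n f k x.

Definition even_fun (f : R -> R) : Prop := forall x, f (- x) = f x.

Definition strict_decr_pos (f : R -> R) : Prop :=
  forall a b, 0 < a -> a < b -> f b < f a.

Definition tends_at_infty (f : R -> R) (l : R) : Prop :=
  is_lim f p_infty l /\ is_lim f m_infty l.

Definition Vspeed (sigma : R) : R := sqrt (1 + sigma).

Definition solves_system (sigma gamma eps : R) (n u phi : R -> R) : Prop :=
  let c := Vspeed sigma + gamma * eps in
  forall xi,
    - c * Derive n xi + Derive (fun x => n x * u x) xi = 0 /\
    - c * Derive u xi + u xi * Derive u xi + sigma * Derive n xi / n xi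
      = - Derive phi xi /\
    eps * Derive_n phi 2 xi = exp (phi xi) - n xi.

(* The solitary wave solution: smooth, nontrivial solution with the far-field
   conditions, the translate that is even with all components strictly
   decreasing on (0, oo). *)
Definition solitary_wave (sigma gamma eps : R) (n u phi : R -> R) : Prop :=
  smooth n /\ smooth u /\ smooth phi /\
  solves_system sigma gamma eps n u phi /\
  tends_at_infty n 1 /\ tends_at_infty u 0 /\ tends_at_infty phi 0 /\
  ~ (forall x, n x = 1 /\ u x = 0 /\ phi x = 0) /\
  even_fun n /\ even_fun u /\ even_fun phi /\
  strict_decr_pos n /\ strict_decr_pos u /\ strict_decr_pos phi.

Definition sech (x : R) : R := / cosh x.

Definition n_KdV (sigma gamma : R) (xi : R) : R :=
  3 * gamma / Vspeed sigma
  * (sech (sqrt (Vspeed sigma * gamma / 2) * xi)) ^ 2.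

(* Main.v *)
Require Import Defs.
From Stdlib Require Import Reals Lra Lia Psatz ClassicalEpsilon.
From Coquelicot Require Import Coquelicot.
Open Scope R_scope.

Lemma mvt_ab (f df : R -> R) (a b : R) :
  a <= b -> (forall x, a <= x <= b -> is_derive f x (df x)) ->
  exists c, a <= c <= b /\ f b - f a = df c * (b - a).
Proof.
  intros Hab Hd.
  destruct (MVT_gen f a b df) as [c [Hc1 Hc2]].
  - intros x Hx. rewrite Rmin_left in Hx by lra. rewrite Rmax_right in Hx by lra.
    apply Hd. split; lra.
  - intros x Hx. rewrite Rmin_left in Hx by lra. rewrite Rmax_right in Hx by lra.
    apply continuity_pt_filterlim. apply (ex_derive_continuous (K := R_AbsRing) (V := R_NormedModule)).
    exists (df x). apply Hd. exact Hx.
  - exists c. rewrite Rmin_left in Hc1 by lra. rewrite Rmax_right in Hc1 by lra.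
    split; [exact Hc1| exact Hc2].
Qed.

Lemma deriv0_const (h : R -> R) :
  (forall x, is_derive h x 0) -> forall x y, h x = h y.
Proof.
  intros Hd x y.
  destruct (Rle_lt_dec x y) as [Hxy|Hxy].
  - destruct (mvt_ab h (fun _ => 0) x y Hxy) as [c [_ Hc]].
    + intros; apply Hd.
    + lra.
  - destruct (mvt_ab h (fun _ => 0) y x (Rlt_le _ _ Hxy)) as [c [_ Hc]].
    + intros; apply Hd.
    + lra.
Qed.

Lemma lim_seq_comp (f : R -> R) (l : R) (s : nat -> R) :
  is_lim f p_infty l -> is_lim_seq s p_infty ->
  is_lim_seq (fun k => f (s k)) l.
Proof.
  intros Hf Hs.
  unfold is_lim_seq. eapply filterlim_comp; [exact Hs|].
  exact Hf.
Qed.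

Lemma even_Derive0 (f : R -> R) :
  even_fun f -> ex_derive f 0 -> Derive f 0 = 0.
Proof.
  intros He Hd.
  assert (H1 : is_derive (fun x => f (- x)) 0 (- Derive f 0)).
  { replace (- Derive f 0) with ((-1) * Derive f (- 0)).
    2:{ rewrite Ropp_0; ring. }
    apply (is_derive_comp f (fun x => - x) 0 (Derive f (-0)) (-1)).
    - rewrite Ropp_0. apply Derive_correct. exact Hd.
    - auto_derive; auto. }
  assert (H2 : is_derive f 0 (- Derive f 0)).
  { eapply is_derive_ext; [|exact H1]. intros t. simpl. apply He. }
  apply is_derive_unique in H2. lra.
Qed.

Lemma lim_eps (f : R -> R) (l : R) :
  is_lim f p_infty l -> forall e, 0 < e -> exists M, forall x, M < x -> Rabs (f x - l) < e.
Proof.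
  intros Hf e He.
  assert (H := Hf (fun y => Rabs (y - l) < e)).
  simpl in H. destruct H as [M HM].
  - exists (mkposreal e He). intros y Hy. exact Hy.
  - exists M. intros x Hx. apply HM. exact Hx.
Qed.

Lemma cont_eps (f : R -> R) (x0 : R) :
  continuous f x0 -> forall e, 0 < e -> exists d, 0 < d /\ forall x, Rabs (x - x0) < d -> Rabs (f x - f x0) < e.
Proof.
  intros Hf e He.
  assert (H := Hf (fun y => Rabs (y - f x0) < e)).
  destruct H as [d Hd].
  - exists (mkposreal e He). intros y Hy. exact Hy.
  - exists d. split; [apply cond_pos|]. intros x Hx. apply Hd. exact Hx.
Qed.

Lemma smooth_ex_derive (f : R -> R) : smooth f -> forall x, ex_derive f x.
Proof. intros H x. exact (H 1%nat x). Qed.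

Lemma smooth_ex_derive2 (f : R -> R) : smooth f -> forall x, ex_derive (Derive f) x.
Proof. intros H x. exact (H 2%nat x). Qed.

Lemma smooth_cont (f : R -> R) : smooth f -> forall x, continuous f x.
Proof.
  intros H x. apply (ex_derive_continuous (K := R_AbsRing) (V := R_NormedModule)).
  apply smooth_ex_derive; auto.
Qed.

Section Mono.
Variable f : R -> R.
Variable l : R.
Hypothesis Hev : even_fun f.
Hypothesis Hdec : strict_decr_pos f.
Hypothesis Hc : forall x, continuous f x.
Hypothesis Hl : is_lim f p_infty l.

Lemma mono_ge_l : forall y, 0 < y -> l <= f y.
Proof.
  intros y Hy. destruct (Rle_lt_dec l (f y)) as [H|H]; [exact H|].
  destruct (lim_eps f l Hl (l - f y)) as [M HM]; [lra|].
  set (x := Rmax M y + 1).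
  assert (H1 : M < x) by (unfold x; generalize (Rmax_l M y); lra).
  assert (H2 : y < x) by (unfold x; generalize (Rmax_r M y); lra).
  specialize (HM x H1). apply Rabs_def2 in HM.
  specialize (Hdec y x Hy H2). lra.
Qed.

Lemma mono_0_ge : forall t, 0 < t -> f t <= f 0.
Proof.
  intros t Ht. destruct (Rle_lt_dec (f t) (f 0)) as [H|H]; [exact H|].
  destruct (cont_eps f 0 (Hc 0) (f t - f 0)) as [d [Hd HD]]; [lra|].
  set (x := Rmin (d/2) (t/2)).
  assert (Hx0 : 0 < x) by (unfold x; apply Rmin_glb_lt; lra).
  assert (Hx1 : x <= d/2) by (unfold x; apply Rmin_l).
  assert (Hx2 : x <= t/2) by (unfold x; apply Rmin_r).
  assert (Hxt : x < t) by lra.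
  specialize (HD x). rewrite Rminus_0_r, Rabs_pos_eq in HD by lra.
  specialize (HD ltac:(lra)). apply Rabs_def2 in HD.
  specialize (Hdec x t Hx0 Hxt). lra.
Qed.

Lemma mono_decr : forall a b, 0 <= a -> a < b -> f b < f a.
Proof.
  intros a b Ha Hab. destruct (Req_dec a 0) as [->|Ha0].
  - assert (H1 := mono_0_ge (b/2) ltac:(lra)). assert (H2 := Hdec (b/2) b ltac:(lra) ltac:(lra)). lra.
  - apply Hdec; lra.
Qed.

Lemma mono_le0 : forall x, f x <= f 0.
Proof.
  intros x. destruct (Rtotal_order x 0) as [H|[H|H]].
  - rewrite <- (Hev x). apply mono_0_ge. lra.
  - subst; lra.
  - apply mono_0_ge; lra.
Qed.

Lemma mono_gt_l : forall x, l < f x.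
Proof.
  assert (Hp : forall x, 0 <= x -> l < f x).
  { intros x Hx. assert (H1 := mono_ge_l (x+1) ltac:(lra)).
    assert (H2 := mono_decr x (x+1) Hx ltac:(lra)). lra. }
  intros x. destruct (Rle_lt_dec 0 x) as [H|H].
  - apply Hp; auto.
  - rewrite <- (Hev x). apply Hp; lra.
Qed.

End Mono.

Lemma b_plus a b A B : Rabs a <= A -> Rabs b <= B -> Rabs (a + b) <= A + B.
Proof. intros. eapply Rle_trans; [apply Rabs_triang|]. lra. Qed.
Lemma b_minus a b A B : Rabs a <= A -> Rabs b <= B -> Rabs (a - b) <= A + B.
Proof. intros. eapply Rle_trans; [apply Rabs_triang|]. rewrite Rabs_Ropp. lra. Qed.
Lemma b_mult a b A B : Rabs a <= A -> Rabs b <= B -> Rabs (a * b) <= A * B.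
Proof. intros. rewrite Rabs_mult. apply Rmult_le_compat; auto; apply Rabs_pos. Qed.
Lemma b_opp a A : Rabs a <= A -> Rabs (- a) <= A.
Proof. intros. rewrite Rabs_Ropp. auto. Qed.
Lemma b_pow a A n : Rabs a <= A -> Rabs (a ^ n) <= A ^ n.
Proof. intros. rewrite <- RPow_abs. apply pow_incr. split; auto. apply Rabs_pos. Qed.

Lemma b_div a b A : Rabs a <= A -> Rabs (a / b) <= A * Rabs (/ b).
Proof. intros. unfold Rdiv. rewrite Rabs_mult. apply Rmult_le_compat_r; auto. apply Rabs_pos. Qed.

Ltac mkb e :=
  match e with
  | ?a + ?b => let A := mkb a in let B := mkb b in constr:(A + B)
  | ?a - ?b => let A := mkb a in let B := mkb b in constr:(A + B)
  | ?a * ?b => let A := mkb a in let B := mkb b in constr:(A * B)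
  | - ?a => let A := mkb a in constr:(A)
  | ?a / ?b => let A := mkb a in constr:(A * Rabs (/ b))
  | ?a ^ ?n => let A := mkb a in constr:(A ^ n)
  | _ => match goal with
         | H : Rabs e <= ?B |- _ => constr:(B)
         | _ => constr:(Rabs e)
         end
  end.

Ltac bndp := first
  [ assumption
  | apply Rle_refl
  | apply b_plus; [bndp | bndp]
  | apply b_minus; [bndp | bndp]
  | apply b_mult; [bndp | bndp]
  | apply b_opp; bndp
  | apply b_div; bndp
  | apply b_pow; bndp ].

Ltac bnd := match goal with
  | |- Rabs ?e <= _ => let B := mkb e in apply Rle_trans with B; [bndp | apply Rle_refl]
  end.

Lemma taylor_step (f f' : R -> R) (r K : R) (n : nat) :
  0 <= K -> f 0 = 0 ->
  (forall x, Rabs x <= r -> is_derive f x (f' x)) ->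
  (forall x, Rabs x <= r -> Rabs (f' x) <= K * Rabs x ^ n) ->
  forall x, Rabs x <= r -> Rabs (f x) <= K * Rabs x ^ (S n).
Proof.
  intros HK H0 Hd Hb x Hx.
  assert (H1 : forall c, Rabs (c - 0) <= r -> is_derive f c (f' c)).
  { intros c Hc. rewrite Rminus_0_r in Hc. auto. }
  assert (H2 : Rabs (x - 0) <= r) by (rewrite Rminus_0_r; auto).
  destruct (MVT_cor4 f f' 0 r H1 x H2) as [c [Hc1 Hc2]].
  rewrite H0, !Rminus_0_r in Hc1. rewrite !Rminus_0_r in Hc2. rewrite Hc1.
  rewrite Rabs_mult. simpl.
  assert (Hc3 : Rabs c <= r) by lra.
  specialize (Hb c Hc3).
  assert (Hp : Rabs c ^ n <= Rabs x ^ n) by (apply pow_incr; split; auto; apply Rabs_pos).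
  assert (0 <= Rabs x) by apply Rabs_pos. assert (0 <= Rabs c ^ n) by (apply pow_le, Rabs_pos).
  assert (K * Rabs c ^ n <= K * Rabs x ^ n) by (apply Rmult_le_compat_l; auto).
  apply Rle_trans with (K * Rabs c ^ n * Rabs x); [apply Rmult_le_compat_r; auto|].
  nra.
Qed.

Lemma exp_bound1 x : Rabs x <= 1 -> Rabs (exp x) <= 3 * Rabs x ^ 0.
Proof.
  intros Hx. simpl. rewrite Rmult_1_r. rewrite Rabs_pos_eq by (left; apply exp_pos).
  apply Rle_trans with (exp 1); [|apply exp_le_3].
  apply Rabs_le_between in Hx. destruct (Req_dec x 1) as [->|Hne]; [lra|].
  left. apply exp_increasing. lra.
Qed.

Lemma exp_taylor4 x : Rabs x <= 1 ->
  exists eta, Rabs eta <= 3 /\ exp x = 1 + x + x^2/2 + x^3/6 + x^4 * eta.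
Proof.
  intros Hx.
  assert (T1 : forall y, Rabs y <= 1 -> Rabs (exp y - 1) <= 3 * Rabs y ^ 1).
  { apply (taylor_step _ exp); [lra| rewrite exp_0; ring | |apply exp_bound1].
    intros y _. auto_derive; auto; ring. }
  assert (T2 : forall y, Rabs y <= 1 -> Rabs (exp y - 1 - y) <= 3 * Rabs y ^ 2).
  { apply (taylor_step _ (fun y => exp y - 1)); [lra| rewrite exp_0; ring | |apply T1].
    intros y _. auto_derive; auto; ring. }
  assert (T3 : forall y, Rabs y <= 1 -> Rabs (exp y - 1 - y - y^2/2) <= 3 * Rabs y ^ 3).
  { apply (taylor_step _ (fun y => exp y - 1 - y)); [lra| rewrite exp_0; field | |apply T2].
    intros y _. auto_derive; auto; field. }
  assert (T4 : forall y, Rabs y <= 1 -> Rabs (exp y - 1 - y - y^2/2 - y^3/6) <= 3 * Rabs y ^ 4).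
  { apply (taylor_step _ (fun y => exp y - 1 - y - y^2/2)); [lra| rewrite exp_0; field | |apply T3].
    intros y _. auto_derive; auto; field. }
  destruct (Req_dec x 0) as [->|Hx0].
  - exists 0. split; [rewrite Rabs_R0; lra|]. rewrite exp_0. field.
  - exists ((exp x - 1 - x - x^2/2 - x^3/6) / x^4). split.
    + specialize (T4 x Hx). unfold Rdiv. rewrite Rabs_mult, Rabs_inv, <- RPow_abs.
      assert (0 < Rabs x ^ 4) by (apply pow_lt; apply Rabs_pos_lt; auto).
      apply Rmult_le_reg_r with (Rabs x ^ 4); auto.
      rewrite Rmult_assoc, Rinv_l by lra. lra.
    + field. auto.
Qed.

Lemma ln_taylor4 m : Rabs m <= 1/2 ->
  exists lam, Rabs lam <= 2 /\ ln (1 + m) = m - m^2/2 + m^3/3 + m^4 * lam.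
Proof.
  intros Hm.
  assert (T : forall y, Rabs y <= 1/2 -> Rabs (ln (1 + y) - y + y^2/2 - y^3/3) <= 2 * Rabs y ^ 4).
  { apply (taylor_step _ (fun y => - y^3 / (1 + y))); [lra| rewrite Rplus_0_r, ln_1; field | |].
    - intros y Hy. apply Rabs_le_between in Hy. auto_derive; [lra|]. field. lra.
    - intros y Hy. apply Rabs_le_between in Hy.
      unfold Rdiv. rewrite Rabs_mult, Rabs_Ropp, Rabs_inv, <- RPow_abs.
      rewrite (Rabs_pos_eq (1 + y)) by lra.
      assert (0 <= Rabs y ^ 3) by (apply pow_le, Rabs_pos).
      apply Rle_trans with (Rabs y ^ 3 * 2).
      + apply Rmult_le_compat_l; auto. rewrite <- Rinv_inv with 2. apply Rinv_le_contravar; lra.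
      + lra. }
  destruct (Req_dec m 0) as [->|Hm0].
  - exists 0. split; [rewrite Rabs_R0; lra|]. rewrite Rplus_0_r, ln_1. field.
  - exists ((ln (1 + m) - m + m^2/2 - m^3/3) / m^4). split.
    + specialize (T m Hm). unfold Rdiv. rewrite Rabs_mult, Rabs_inv, <- RPow_abs.
      assert (0 < Rabs m ^ 4) by (apply pow_lt; apply Rabs_pos_lt; auto).
      apply Rmult_le_reg_r with (Rabs m ^ 4); auto.
      rewrite Rmult_assoc, Rinv_l by lra. unfold Rdiv in T. lra.
    + field. auto.
Qed.
Definition Yp (m d s q L : R) : R := (- (5/2) - (5/2)*s - (1)*s*L - (5/2)*d + (2)*m + (1)*m*q + (2)*m*s + (1)*m*s*q + (2)*m*d + (1)*m*d*q - (3/2)*m^2 - (1)*m^2*q - (3/2)*m^2*s - (1)*m^2*s*q - (3/2)*m^2*d - (1)*m^2*d*q + (1)*m^3 + (1)*m^3*q + (1)*m^3*s + (1)*m^3*s*q + (1)*m^3*d + (1)*m^3*d*q - (1/2)*m^4 - (1)*m^4*q - (1/2)*m^4*s - (1)*m^4*s*q - (1/2)*m^4*d - (1)*m^4*d*q + (1)*m^5*q + (1)*m^5*s*q + (1)*m^5*d*q - (1/2)*m^6*q^2 - (1/2)*m^6*s*q^2 - (1/2)*m^6*d*q^2).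
Definition A1p (m d s q Y : R) : R := (- (3/2) - (1)*s - (1)*d + (1/6)*d^2).
Definition A2p (m d s q Y : R) : R := ((27/8) + (1)*Y + (11/3)*s + (1/2)*s^2 + (5)*d + (13/6)*d*s + (7/8)*d^2 - (1/2)*d^2*s - (3/4)*d^3 - (7/8)*m + (1)*m*Y - (1)*m*q - (13/6)*m*s - (1)*m*s*q - (7/6)*m*s^2 + (3/8)*m*d + (1)*m*d*Y - (1)*m*d*q + (1/6)*m*d*s + (1/2)*m*d*s^2 + (27/8)*m*d^2 + (7/3)*m*d^2*s + (17/8)*m*d^3 - (25/16)*m^2 - (1)*m^2*Y - (55/24)*m^2*s - (1)*m^2*s*Y - (37/36)*m^2*s^2 - (1/6)*m^2*s^3 - (107/16)*m^2*d - (1/2)*m^2*d*Y - (95/12)*m^2*d*s - (29/12)*m^2*d*s^2 - (139/16)*m^2*d^2 + (1/2)*m^2*d^2*Y - (45/8)*m^2*d^2*s - (57/16)*m^2*d^3 + (17/4)*m^3 + (1/2)*m^3*Y + (197/24)*m^3*s + (2/3)*m^3*s*Y + (44/9)*m^3*s^2 + (5/6)*m^3*s^3 + (51/4)*m^3*d - (1)*m^3*d*Y + (197/12)*m^3*d*s - (1)*m^3*d*s*Y + (44/9)*m^3*d*s^2 + (51/4)*m^3*d^2 - (3/2)*m^3*d^2*Y + (197/24)*m^3*d^2*s + (17/4)*m^3*d^3 - (3)*m^4 + (25/8)*m^4*Y + (1/2)*m^4*Y^2 - (7)*m^4*s + (19/6)*m^4*s*Y - (65/12)*m^4*s^2 +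 (1/2)*m^4*s^2*Y - (25/18)*m^4*s^3 - (9)*m^4*d + (25/4)*m^4*d*Y - (14)*m^4*d*s + (19/6)*m^4*d*s*Y - (65/12)*m^4*d*s^2 - (9)*m^4*d^2 + (25/8)*m^4*d^2*Y - (7)*m^4*d^2*s - (3)*m^4*d^3 + (4/3)*m^5 - (3)*m^5*Y + (1/2)*m^5*Y^2 + (10/3)*m^5*s - (9/2)*m^5*s*Y + (25/9)*m^5*s^2 - (5/3)*m^5*s^2*Y + (125/162)*m^5*s^3 + (4)*m^5*d - (6)*m^5*d*Y + (1/2)*m^5*d*Y^2 + (20/3)*m^5*d*s - (9/2)*m^5*d*s*Y + (25/9)*m^5*d*s^2 + (4)*m^5*d^2 - (3)*m^5*d^2*Y + (10/3)*m^5*d^2*s + (4/3)*m^5*d^3 + (2)*m^6*Y - (3/4)*m^6*Y^2 + (10/3)*m^6*s*Y - (1/2)*m^6*s*Y^2 + (25/18)*m^6*s^2*Y + (4)*m^6*d*Y - (3/4)*m^6*d*Y^2 + (10/3)*m^6*d*s*Y + (2)*m^6*d^2*Y + (1)*m^7*Y^2 + (5/6)*m^7*s*Y^2 + (1)*m^7*d*Y^2 + (1/6)*m^8*Y^3).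
Definition EB1p (m d s q Y : R) : R := (- (7/3) - (13/3)*s - (2)*s^2 - (17/2)*d - (32/3)*d*s - (2)*d*s^2 - (6)*d^2 - (3)*d^2*s + (1/6)*d^3 + (69/8)*m + (1)*m*Y + (61/4)*m*s + (47/6)*m*s^2 + (1)*m*s^3 + (33/2)*m*d - (1)*m*d*Y + (21)*m*d*s + (19/3)*m*d*s^2 + (57/8)*m*d^2 + (23/4)*m*d^2*s - (3/4)*m*d^3 - (55/8)*m^2 + (3)*m^2*Y - (103/6)*m^2*s + (2)*m^2*s*Y - (27/2)*m^2*s^2 - (10/3)*m^2*s^3 - (93/8)*m^2*d + (3)*m^2*d*Y - (125/6)*m^2*d*s + (2)*m^2*d*s*Y - (17/2)*m^2*d*s^2 - (21/8)*m^2*d^2 - (11/3)*m^2*d^2*s + (17/8)*m^2*d^3 + (39/16)*m^3 - (4)*m^3*Y + (67/8)*m^3*s - (6)*m^3*s*Y + (101/12)*m^3*s^2 - (2)*m^3*s^2*Y + (47/18)*m^3*s^3 + (21/16)*m^3*d - (7/2)*m^3*d*Y + (27/4)*m^3*d*s - (3)*m^3*d*s*Y + (17/4)*m^3*d*s^2 - (75/16)*m^3*d^2 + (1/2)*m^3*d^2*Y - (13/8)*m^3*d^2*s - (57/16)*m^3*d^3 + (17/4)*m^4 + (9/2)*m^4*Y + (197/24)*m^4*s + (8)*m^4*s*Y + (44/9)*m^4*s^2 + (10/3)*m^4*s^2*Y + (5/6)*m^4*s^3 + (51/4)*m^4*d + (3)*m^4*d*Y + (197/12)*m^4*d*s + (3)*m^4*d*s*Y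 + (44/9)*m^4*d*s^2 + (51/4)*m^4*d^2 - (3/2)*m^4*d^2*Y + (197/24)*m^4*d^2*s + (17/4)*m^4*d^3 - (3)*m^5 + (25/8)*m^5*Y + (3/2)*m^5*Y^2 - (7)*m^5*s + (19/6)*m^5*s*Y + (1)*m^5*s*Y^2 - (65/12)*m^5*s^2 + (1/2)*m^5*s^2*Y - (25/18)*m^5*s^3 - (9)*m^5*d + (25/4)*m^5*d*Y - (14)*m^5*d*s + (19/6)*m^5*d*s*Y - (65/12)*m^5*d*s^2 - (9)*m^5*d^2 + (25/8)*m^5*d^2*Y - (7)*m^5*d^2*s - (3)*m^5*d^3 + (4/3)*m^6 - (3)*m^6*Y + (1/2)*m^6*Y^2 + (10/3)*m^6*s - (9/2)*m^6*s*Y + (25/9)*m^6*s^2 - (5/3)*m^6*s^2*Y + (125/162)*m^6*s^3 + (4)*m^6*d - (6)*m^6*d*Y + (1/2)*m^6*d*Y^2 + (20/3)*m^6*d*s - (9/2)*m^6*d*s*Y + (25/9)*m^6*d*s^2 + (4)*m^6*d^2 - (3)*m^6*d^2*Y + (10/3)*m^6*d^2*s + (4/3)*m^6*d^3 + (2)*m^7*Y - (3/4)*m^7*Y^2 + (10/3)*m^7*s*Y - (1/2)*m^7*s*Y^2 + (25/18)*m^7*s^2*Y + (4)*m^7*d*Y - (3/4)*m^7*d*Y^2 + (10/3)*m^7*d*s*Y + (2)*m^7*d^2*Y + (1)*m^8*Y^2 + (5/6)*m^8*s*Y^2 + (1)*m^8*d*Y^2 + (1/6)*m^9*Y^3).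
Definition EB2p (m d s q Y : R) : R := ((3) + (3)*s + (3)*d + (1)*d*s).
Definition EB3p (m d s q Y : R) : R := (- (1)).
Definition Wp (m d s q Y : R) : R := (- (3/2) - (1)*s - (3/2)*d + (2)*m + (5/3)*m*s + (2)*m*d + (1)*m^2*Y).


Definition a_c (d s : R) := (3*(1+s+d) - s)/2.
Definition b_c (d s : R) := 2*(1+s+d) - s/3.
Definition p3 (m d s : R) := (1+d) - a_c d s * m + b_c d s * m^2.
Definition phi1 (m d s Y : R) := p3 m d s + m^3 * Y.
Definition qs (m q : R) := 1 - m + m^2 - m^3 + m^4*q.

Lemma idY m d s q L : (1+s+d)*(m*qs m q) - (1+s+d)*(m*qs m q)^2/2 - s*(m - m^2/2 + m^3/3 + m^4*L)
  = m * phi1 m d s (Yp m d s q L).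
Proof. unfold phi1, p3, a_c, b_c, qs, Yp. field. Qed.

Lemma idA m d s q Y : let f := phi1 m d s Y in
  m*f + (m*f)^2/2 + (m*f)^3/6 - (1+s+d)*(m*qs m q) + s*m - m^2*(d*(1+d)/2 - (1+s)*m/3)
  = d*m^3*A1p m d s q Y + m^4*A2p m d s q Y.
Proof. intros f. unfold f, phi1, p3, a_c, b_c, qs, A1p, A2p. field. Qed.

Lemma idE m d s q Y : let f := phi1 m d s Y in
  m*f + (m*f)^2/2 + (m*f)^3/6 - m - d*(m*f) + (1+s)*(m*f)^2
  = m^3*EB1p m d s q Y + d*m^2*EB2p m d s q Y + d^2*m*EB3p m d s q Y.
Proof. intros f. unfold f, phi1, p3, a_c, b_c, qs, EB1p, EB2p, EB3p. field. Qed.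

Lemma idW m d s q Y : phi1 m d s Y - 1 = d + m * Wp m d s q Y.
Proof. unfold phi1, p3, a_c, b_c, Wp. field. Qed.

Definition Phi (c2 s m : R) := c2 * (m/(1+m)) - c2 * (m/(1+m))^2/2 - s * ln (1+m).
Definition Gf (c2 s m : R) := exp (Phi c2 s m) - 1 - c2 * (m/(1+m)) + s * m.

Ltac nonneg := repeat (apply Rplus_le_le_0_compat || apply Rmult_le_pos || apply pow_le || apply Rabs_pos || (left; apply Rinv_0_lt_compat) || (apply Rlt_le; apply Rinv_0_lt_compat)); try lra.

Lemma abs_nm x y Yb : 0 <= x -> Rabs y <= Yb -> Rabs (x * y) <= x * Yb.
Proof. intros Hx Hy. rewrite Rabs_mult, Rabs_pos_eq by auto. apply Rmult_le_compat_l; auto. Qed.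

Lemma expansions (s : R) : 0 <= s ->
  exists mA CG CE CW B1, 0 < mA /\ mA <= 1/2 /\ 0 <= CG /\ 0 <= CE /\ 0 <= CW /\ 0 <= B1 /\
  forall m d, 0 <= m <= mA -> 0 <= d <= 1 ->
    Rabs (Gf (1+s+d) s m - m^2 * (d*(1+d)/2 - (1+s)*m/3)) <= CG * (d * m^3 + m^4) /\
    Rabs (exp (Phi (1+s+d) s m) - 1 - m - d * Phi (1+s+d) s m + (1+s) * (Phi (1+s+d) s m)^2)
       <= CE * (m^3 + d * m^2 + d^2 * m) /\
    Rabs (Phi (1+s+d) s m - m) <= m * d + CW * m^2 /\
    Rabs (Phi (1+s+d) s m) <= B1 * m.
Proof.
  intros Hs.
  assert (HBY : exists BY, 0 <= BY /\ forall m d q L, Rabs m <= 1 -> Rabs d <= 1 -> Rabs q <= 1 -> Rabs L <= 2 ->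
            Rabs (Yp m d s q L) <= BY).
  { eexists. split. 2:{ intros m d q L Hm Hd Hq HL. unfold Yp. bnd. } nonneg. }
  destruct HBY as [BY [HBY0 HBY]].
  assert (HB1 : exists B, 0 <= B /\ forall m d Y, Rabs m <= 1 -> Rabs d <= 1 -> Rabs Y <= BY ->
            Rabs (phi1 m d s Y) <= B).
  { eexists. split. 2:{ intros m d Y Hm Hd HY. unfold phi1, p3, a_c, b_c. bnd. } nonneg. }
  destruct HB1 as [B1 [HB10 HB1]].
  assert (HA : exists C1 C2, 0 <= C1 /\ 0 <= C2 /\ forall m d q Y, Rabs m <= 1 -> Rabs d <= 1 -> Rabs q <= 1 -> Rabs Y <= BY ->
            Rabs (A1p m d s q Y) <= C1 /\ Rabs (A2p m d s q Y) <= C2).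
  { do 2 eexists. split; [|split]. 3:{ intros m d q Y Hm Hd Hq HY. unfold A1p, A2p. split; bnd. } all: nonneg. }
  destruct HA as [CA1 [CA2 [HCA1 [HCA2 HA]]]].
  assert (HE : exists C1 C2 C3, 0 <= C1 /\ 0 <= C2 /\ 0 <= C3 /\ forall m d q Y, Rabs m <= 1 -> Rabs d <= 1 -> Rabs q <= 1 -> Rabs Y <= BY ->
            Rabs (EB1p m d s q Y) <= C1 /\ Rabs (EB2p m d s q Y) <= C2 /\ Rabs (EB3p m d s q Y) <= C3).
  { do 3 eexists. split; [|split; [|split]]. 4:{ intros m d q Y Hm Hd Hq HY. unfold EB1p, EB2p, EB3p. split; [|split]; bnd. } all: nonneg. }
  destruct HE as [CE1 [CE2 [CE3 [HCE1 [HCE2 [HCE3 HE]]]]]].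
  assert (HW : exists C, 0 <= C /\ forall m d q Y, Rabs m <= 1 -> Rabs d <= 1 -> Rabs q <= 1 -> Rabs Y <= BY ->
            Rabs (Wp m d s q Y) <= C).
  { eexists. split. 2:{ intros m d q Y Hm Hd Hq HY. unfold Wp. bnd. } nonneg. }
  destruct HW as [CW [HCW0 HW]].
  exists (Rmin (1/2) (1/(B1+1))), (CA1 + CA2 + 3 * B1^4), (CE1 + CE2 + CE3 + 3 * B1^4), CW, B1.
  assert (Hmin1 := Rmin_l (1/2) (1/(B1+1))). assert (Hmin2 := Rmin_r (1/2) (1/(B1+1))).
  assert (Hpos : 0 < Rmin (1/2) (1/(B1+1))).
  { apply Rmin_glb_lt; [lra|]. apply Rdiv_lt_0_compat; lra. }
  assert (0 <= B1^4) by nonneg.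
  split; [auto|]. split; [auto|]. split; [nonneg|]. split; [nonneg|]. split; [auto|]. split; [auto|].
  intros m d Hm Hd.
  set (q := / (1 + m)).
  assert (Hq : 0 < q <= 1).
  { unfold q. split; [apply Rinv_0_lt_compat; lra|]. rewrite <- Rinv_1. apply Rinv_le_contravar; lra. }
  assert (Hqs : m / (1 + m) = m * qs m q).
  { unfold qs, q. field. lra. }
  destruct (ln_taylor4 m) as [L [HL HLe]].
  { rewrite Rabs_pos_eq; lra. }
  set (Y := Yp m d s q L).
  assert (Hm1 : Rabs m <= 1) by (rewrite Rabs_pos_eq; lra).
  assert (Hd1 : Rabs d <= 1) by (rewrite Rabs_pos_eq; lra).
  assert (Hq1 : Rabs q <= 1) by (rewrite Rabs_pos_eq; lra).
  assert (HY : Rabs Y <= BY) by (apply HBY; auto).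
  set (f := phi1 m d s Y).
  assert (Hf : Rabs f <= B1) by (apply HB1; auto).
  assert (HPhi : Phi (1+s+d) s m = m * f).
  { unfold Phi. rewrite Hqs, HLe. unfold f, Y. apply idY. }
  assert (HPb : Rabs (Phi (1+s+d) s m) <= B1 * m).
  { rewrite HPhi, (Rmult_comm B1 m). apply abs_nm; lra. }
  assert (HP1 : Rabs (Phi (1+s+d) s m) <= 1).
  { apply Rle_trans with (B1 * m); auto.
    assert (m * (B1 + 1) <= 1).
    { apply Rle_trans with (1 / (B1 + 1) * (B1 + 1)).
      - apply Rmult_le_compat_r; lra.
      - right. field. lra. }
    nra. }
  destruct (exp_taylor4 _ HP1) as [eta [Heta Hexp]].
  assert (Hf4 : Rabs (f^4 * eta) <= B1^4 * 3).
  { apply b_mult; auto. apply b_pow; auto. }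
  assert (0 <= m^2) by nonneg. assert (0 <= m^3) by nonneg. assert (0 <= m^4) by nonneg.
  split; [|split; [|split]].
  - unfold Gf. rewrite Hexp, Hqs, HPhi.
    replace (1 + m * f + (m * f) ^ 2 / 2 + (m * f) ^ 3 / 6 + (m * f) ^ 4 * eta - 1 - (1 + s + d) * (m * qs m q) + s * m - m ^ 2 * (d * (1 + d) / 2 - (1 + s) * m / 3))
      with ((m*f + (m*f)^2/2 + (m*f)^3/6 - (1+s+d)*(m*qs m q) + s*m - m^2*(d*(1+d)/2 - (1+s)*m/3)) + m^4 * (f^4 * eta)) by ring.
    assert (Hid := idA m d s q Y). cbv zeta in Hid. fold f in Hid. rewrite Hid.
    destruct (HA m d q Y) as [HA1 HA2]; auto.
    apply Rle_trans with (d * m^3 * CA1 + m^4 * CA2 + m^4 * (B1^4 * 3)).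
    + apply b_plus; [apply b_plus|]; apply abs_nm; nonneg.
    + assert (0 <= d * m^3) by nonneg.
      assert (0 <= d * m^3 * (CA2 + 3 * B1^4)) by nonneg.
      assert (0 <= m^4 * CA1) by nonneg.
      nra.
  - rewrite Hexp, HPhi.
    replace (1 + m * f + (m * f) ^ 2 / 2 + (m * f) ^ 3 / 6 + (m * f) ^ 4 * eta - 1 - m - d * (m * f) + (1 + s) * (m * f) ^ 2)
      with ((m*f + (m*f)^2/2 + (m*f)^3/6 - m - d*(m*f) + (1+s)*(m*f)^2) + m^4 * (f^4 * eta)) by ring.
    assert (Hid := idE m d s q Y). cbv zeta in Hid. fold f in Hid. rewrite Hid.
    destruct (HE m d q Y) as [HE1 [HE2 HE3]]; auto.
    assert (0 <= d * m^2) by nonneg. assert (0 <= d^2 * m) by nonneg.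
    assert (m^4 <= m^3) by (replace (m^4) with (m * m^3) by ring; nra).
    apply Rle_trans with (m^3 * CE1 + d * m^2 * CE2 + d^2 * m * CE3 + m^4 * (B1^4 * 3)).
    + apply b_plus; [apply b_plus; [apply b_plus|]|]; apply abs_nm; nonneg.
    + assert (0 <= m^3 * CE2) by nonneg. assert (0 <= m^3 * CE3) by nonneg.
      assert (0 <= d * m^2 * CE1) by nonneg.
      nra.
  - rewrite HPhi. replace (m * f - m) with (m * (f - 1)) by ring. unfold f. rewrite (idW m d s q Y).
    replace (m * (d + m * Wp m d s q Y)) with (m * d + m^2 * Wp m d s q Y) by ring.
    apply Rle_trans with (m * d + m^2 * CW).
    + apply b_plus; [rewrite Rabs_pos_eq by nonneg; lra|]. apply abs_nm; auto.
    + lra.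
  - exact HPb.
Qed.

Lemma const_lim (h : R -> R) (t : nat -> R) (l : R) :
  (forall x, is_derive h x 0) -> is_lim_seq (fun k => h (t k)) l -> forall x, h x = l.
Proof.
  intros Hd Hl x.
  assert (H : is_lim_seq (fun k => h (t k)) (h x)).
  { eapply is_lim_seq_ext; [|apply is_lim_seq_const]. intros k. simpl. apply deriv0_const; auto. }
  apply is_lim_seq_unique in H. apply is_lim_seq_unique in Hl. rewrite Hl in H. injection H. auto.
Qed.

Lemma V_ge1 (sigma : R) : 0 <= sigma -> 1 <= Vspeed sigma.
Proof.
  intros Hs. unfold Vspeed. rewrite <- sqrt_1 at 1. apply sqrt_le_1_alt. lra.
Qed.

Lemma V_sq (sigma : R) : 0 <= sigma -> Vspeed sigma * Vspeed sigma = 1 + sigma.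
Proof. intros Hs. unfold Vspeed. apply sqrt_sqrt. lra. Qed.

Lemma lim_eq (u : nat -> R) (l l' : R) : is_lim_seq u l -> l = l' -> is_lim_seq u l'.
Proof. intros H ->. exact H. Qed.

Ltac etafix := repeat match goal with
  | |- context [Derive (fun y => ?f y) ?x] => progress change (Derive (fun y => f y) x) with (Derive f x)
  end.

Section FI.
Variables sigma gamma eps : R.
Hypothesis Hs : 0 <= sigma.
Hypothesis Hg : 0 < gamma.
Hypothesis He : 0 < eps.
Variables N U F : R -> R.
Hypothesis Hsw : solitary_wave sigma gamma eps N U F.

Definition cc := Vspeed sigma + gamma * eps.

Lemma cc_pos : 1 <= cc.
Proof. unfold cc. generalize (V_ge1 sigma Hs). nra. Qed.

Lemma sw_N : smooth N. Proof. apply Hsw. Qed.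
Lemma sw_U : smooth U. Proof. apply Hsw. Qed.
Lemma sw_F : smooth F. Proof. apply Hsw. Qed.
Lemma sw_sys : solves_system sigma gamma eps N U F. Proof. apply Hsw. Qed.
Lemma sw_limN : is_lim N p_infty 1. Proof. apply Hsw. Qed.
Lemma sw_limU : is_lim U p_infty 0. Proof. apply Hsw. Qed.
Lemma sw_limF : is_lim F p_infty 0. Proof. apply Hsw. Qed.
Lemma sw_evN : even_fun N. Proof. apply Hsw. Qed.
Lemma sw_evU : even_fun U. Proof. apply Hsw. Qed.
Lemma sw_evF : even_fun F. Proof. apply Hsw. Qed.
Lemma sw_decN : strict_decr_pos N. Proof. apply Hsw. Qed.
Lemma sw_decU : strict_decr_pos U. Proof. apply Hsw. Qed.
Lemma sw_decF : strict_decr_pos F. Proof. apply Hsw. Qed.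

Lemma N_gt1 : forall x, 1 < N x.
Proof. apply (mono_gt_l N 1 sw_evN sw_decN (smooth_cont N sw_N) sw_limN). Qed.
Lemma U_gt0 : forall x, 0 < U x.
Proof. apply (mono_gt_l U 0 sw_evU sw_decU (smooth_cont U sw_U) sw_limU). Qed.
Lemma F_gt0 : forall x, 0 < F x.
Proof. apply (mono_gt_l F 0 sw_evF sw_decF (smooth_cont F sw_F) sw_limF). Qed.
Lemma N_le0 : forall x, N x <= N 0.
Proof. apply (mono_le0 N sw_evN sw_decN (smooth_cont N sw_N)). Qed.
Lemma F_le0 : forall x, F x <= F 0.
Proof. apply (mono_le0 F sw_evF sw_decF (smooth_cont F sw_F)). Qed.

Lemma INR_lim : is_lim_seq INR p_infty.
Proof. apply is_lim_seq_INR. Qed.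

Lemma FI1 : forall x, N x * (cc - U x) = cc.
Proof.
  apply (const_lim (fun x => N x * (cc - U x)) INR).
  - intros x. destruct (sw_sys x) as [E1 _].
    assert (dN := smooth_ex_derive N sw_N x). assert (dU := smooth_ex_derive U sw_U x).
    rewrite Derive_mult in E1 by auto. fold cc in E1.
    auto_derive; [tauto|]. etafix. lra.
  - apply (lim_eq _ (1 * (cc - 0))); [|ring].
    apply is_lim_seq_mult'.
    + apply lim_seq_comp; [apply sw_limN | apply INR_lim].
    + apply is_lim_seq_minus'; [apply is_lim_seq_const|].
      apply lim_seq_comp; [apply sw_limU | apply INR_lim].
Qed.

Lemma FI2 : forall x, F x - cc * U x + U x ^ 2 / 2 + sigma * ln (N x) = 0.
Proof.
  apply (const_lim (fun x => F x - cc * U x + U x ^ 2 / 2 + sigma * ln (N x)) INR).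
  - intros x. destruct (sw_sys x) as [_ [E2 _]].
    assert (dN := smooth_ex_derive N sw_N x). assert (dU := smooth_ex_derive U sw_U x).
    assert (dF := smooth_ex_derive F sw_F x). assert (Np := N_gt1 x). fold cc in E2.
    auto_derive; [repeat split; auto; lra|]. etafix. unfold Rdiv in E2. lra.
  - assert (LU : is_lim_seq (fun k => U (INR k)) 0) by (apply lim_seq_comp; [apply sw_limU | apply INR_lim]).
    assert (LN : is_lim_seq (fun k => N (INR k)) 1) by (apply lim_seq_comp; [apply sw_limN | apply INR_lim]).
    assert (LF : is_lim_seq (fun k => F (INR k)) 0) by (apply lim_seq_comp; [apply sw_limF | apply INR_lim]).
    apply is_lim_seq_ext with (u := fun k => F (INR k) - cc * U (INR k) + U (INR k) * (U (INR k) * / 2) + sigma * ln (N (INR k))).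
    { intros k. simpl. field. }
    apply (lim_eq _ (0 - cc * 0 + 0 * (0 * / 2) + sigma * ln 1)); [|rewrite ln_1; ring].
    apply is_lim_seq_plus'; [apply is_lim_seq_plus'|].
    + apply is_lim_seq_minus'; auto.
      apply is_lim_seq_mult'; auto. apply is_lim_seq_const.
    + apply is_lim_seq_mult'; auto. apply is_lim_seq_mult'; auto. apply is_lim_seq_const.
    + apply is_lim_seq_mult'; [apply is_lim_seq_const|].
      apply (is_lim_seq_continuous ln (fun k => N (INR k)) 1); auto.
      apply continuity_pt_filterlim. apply continuous_ln. lra.
Qed.

Lemma FI3 : forall x, eps * (Derive F x) ^ 2 / 2 = exp (F x) - 1 - cc * U x + sigma * (N x - 1).
Proof.
  assert (H : forall x, eps * (Derive F x) ^ 2 / 2 - exp (F x) + cc * U x - sigma * N x = - 1 - sigma).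
  2:{ intros x. specialize (H x). lra. }
  assert (Hth0 : forall k:nat, {t | INR k <= t <= INR k + 1 /\ F (INR k + 1) - F (INR k) = Derive F t * (INR k + 1 - INR k)}).
  { intros k. apply constructive_indefinite_description. apply mvt_ab; [lra|].
    intros y _. apply Derive_correct, smooth_ex_derive, sw_F. }
  set (th := fun k => proj1_sig (Hth0 k)).
  apply (const_lim (fun x => eps * (Derive F x) ^ 2 / 2 - exp (F x) + cc * U x - sigma * N x) th).
  - intros x. destruct (sw_sys x) as [_ [E2 E3]].
    assert (dN := smooth_ex_derive N sw_N x). assert (dU := smooth_ex_derive U sw_U x).
    assert (dF := smooth_ex_derive F sw_F x). assert (dF2 := smooth_ex_derive2 F sw_F x).
    assert (Np := N_gt1 x). fold cc in E2. assert (H1 := FI1 x).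
    change (Derive_n F 2 x) with (Derive (Derive F) x) in E3.
    auto_derive; [repeat split; auto|]. etafix.
    assert (K1 : N x * Derive F x = cc * Derive U x - sigma * Derive N x).
    { assert (K2 : Derive F x = - (- cc * Derive U x + U x * Derive U x) - sigma * Derive N x / N x) by lra.
      rewrite K2. field_simplify; [|lra].
      replace (N x * cc * Derive U x - N x * Derive U x * U x) with ((N x * (cc - U x)) * Derive U x) by ring.
      rewrite H1; ring. }
    transitivity (Derive F x * (eps * Derive (Derive F) x - (exp (F x) - N x)) - (N x * Derive F x - (cc * Derive U x - sigma * Derive N x))).
    + field.
    + rewrite K1, E3. ring.
  - assert (Hth : forall k, INR k <= th k <= INR k + 1 /\ F (INR k + 1) - F (INR k) = Derive F (th k) * (INR k + 1 - INR k)).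
    { intros k. unfold th. exact (proj2_sig (Hth0 k)). }
    assert (Lth : is_lim_seq th p_infty).
    { apply is_lim_seq_le_p_loc with (u := INR); [|apply INR_lim].
      exists 0%nat. intros k _. apply Hth. }
    assert (L1 : is_lim_seq (fun k => INR k + 1) p_infty).
    { apply is_lim_seq_le_p_loc with (u := INR); [|apply INR_lim].
      exists 0%nat. intros k _. lra. }
    assert (LU : is_lim_seq (fun k => U (th k)) 0) by (apply lim_seq_comp; [apply sw_limU | exact Lth]).
    assert (LN : is_lim_seq (fun k => N (th k)) 1) by (apply lim_seq_comp; [apply sw_limN | exact Lth]).
    assert (LF : is_lim_seq (fun k => F (th k)) 0) by (apply lim_seq_comp; [apply sw_limF | exact Lth]).
    assert (LD : is_lim_seq (fun k => Derive F (th k)) 0).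
    { apply is_lim_seq_ext with (u := fun k => F (INR k + 1) - F (INR k)).
      { intros k. destruct (Hth k) as [_ E]. rewrite E. ring. }
      apply (lim_eq _ (0 - 0)); [|ring]. apply is_lim_seq_minus'.
      - apply lim_seq_comp; [apply sw_limF | exact L1].
      - apply lim_seq_comp; [apply sw_limF | apply INR_lim]. }
    apply is_lim_seq_ext with (u := fun k => eps * (Derive F (th k) * Derive F (th k)) * / 2 - exp (F (th k)) + cc * U (th k) - sigma * N (th k)).
    { intros k. simpl. field. }
    apply (lim_eq _ (eps * (0 * 0) * / 2 - exp 0 + cc * 0 - sigma * 1)); [|rewrite exp_0; ring].
    apply is_lim_seq_minus'; [apply is_lim_seq_plus'; [apply is_lim_seq_minus'|]|].
    + apply is_lim_seq_mult'; [|apply is_lim_seq_const].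
      apply is_lim_seq_mult'; [apply is_lim_seq_const|]. apply is_lim_seq_mult'; auto.
    + apply (is_lim_seq_continuous exp (fun k => F (th k)) 0); auto.
      apply continuity_pt_filterlim. apply continuous_exp.
    + apply is_lim_seq_mult'; auto. apply is_lim_seq_const.
    + apply is_lim_seq_mult'; auto. apply is_lim_seq_const.
Qed.

Lemma U_eq x : U x = cc * (N x - 1) / N x.
Proof. assert (H := FI1 x). assert (Np := N_gt1 x).
  transitivity ((N x * cc - N x * (cc - U x)) / N x); [field; lra | rewrite H; field; lra]. Qed.

Lemma F_Phi x : F x = Phi (cc^2) sigma (N x - 1).
Proof.
  assert (H := FI2 x). assert (Np := N_gt1 x). unfold Phi.
  replace (1 + (N x - 1)) with (N x) by ring.
  rewrite (U_eq x) in H. replace (N x - 1) with (N x - 1) by ring.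
  assert (H2 : F x = cc * (cc * (N x - 1) / N x) - (cc * (N x - 1) / N x) ^ 2 / 2 - sigma * ln (N x)) by lra.
  rewrite H2. field. lra.
Qed.

Lemma G_rel x : eps * (Derive F x)^2 / 2 = Gf (cc^2) sigma (N x - 1).
Proof.
  rewrite FI3. unfold Gf. rewrite <- F_Phi. rewrite (U_eq x). assert (Np := N_gt1 x).
  replace (1 + (N x - 1)) with (N x) by ring. field. lra.
Qed.

Lemma F2_rel x : eps * Derive (Derive F) x = exp (F x) - 1 - (N x - 1).
Proof.
  destruct (sw_sys x) as [_ [_ E3]]. change (Derive_n F 2 x) with (Derive (Derive F) x) in E3.
  rewrite E3. ring.
Qed.

Lemma G0 : Gf (cc^2) sigma (N 0 - 1) = 0.
Proof.
  rewrite <- G_rel. rewrite (even_Derive0 F sw_evF (smooth_ex_derive F sw_F 0)). field.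
Qed.

Lemma Gpos y : 0 < y < N 0 - 1 -> 0 <= Gf (cc^2) sigma y.
Proof.
  intros Hy.
  destruct (lim_eps N 1 sw_limN y) as [M HM]; [lra|].
  set (T := Rmax M 0 + 1).
  assert (HT : M < T) by (unfold T; generalize (Rmax_l M 0); lra).
  assert (HT0 : 0 < T) by (unfold T; generalize (Rmax_r M 0); lra).
  specialize (HM T HT). apply Rabs_def2 in HM.
  destruct (IVT_gen_consistent N 0 T (y + 1)) as [x [Hx Hx2]].
  - intros; apply smooth_cont, sw_N.
  - rewrite Rmin_right by lra. rewrite Rmax_left by lra. split; lra.
  - replace y with (N x - 1) by lra. rewrite <- G_rel.
    assert (0 <= (Derive F x)^2) by apply pow2_ge_0. 
    apply Rmult_le_pos; [|lra]. apply Rmult_le_pos; lra.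
Qed.

End FI.

Lemma Rmin_pos a b : 0 < a -> 0 < b -> 0 < Rmin a b.
Proof. intros; apply Rmin_glb_lt; auto. Qed.

Lemma stepAB (sigma gamma : R) : 0 <= sigma -> 0 < gamma ->
  exists e2 K C0 CB B1, 0 < e2 /\ 0 < K /\ 0 <= C0 /\ 0 <= CB /\ 0 <= B1 /\
  forall eps, 0 < eps < e2 ->
  let c2 := (Vspeed sigma + gamma * eps)^2 in
  (forall m0, 0 < m0 -> Gf c2 sigma m0 = 0 -> (forall y, 0 < y < m0 -> 0 <= Gf c2 sigma y) ->
     m0 <= K * eps /\ Rabs (Phi c2 sigma m0 / eps - 3 * gamma / Vspeed sigma) <= C0 * eps) /\
  (forall m, 0 <= m <= K * eps ->
     Rabs (exp (Phi c2 sigma m) - 1 - m - 2 * Vspeed sigma * gamma * eps * Phi c2 sigma m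
           + (1 + sigma) * (Phi c2 sigma m)^2) <= CB * eps^3 /\
     Rabs (Phi c2 sigma m) <= B1 * K * eps).
Proof.
  intros Hs Hg.
  destruct (expansions sigma Hs) as (mA & CG & CE & CW & B1 & HmA & HmA2 & HCG & HCE & HCW & HB1 & HX).
  set (V := Vspeed sigma).
  assert (HV1 : 1 <= V) by (apply V_ge1; auto).
  assert (HV2 : V * V = 1 + sigma) by (apply V_sq; auto).
  set (D := 2 * V * gamma + gamma^2).
  set (K := 6 * gamma / V).
  assert (HD : 0 < D) by (unfold D; nra).
  assert (HK : 0 < K) by (unfold K; apply Rdiv_lt_0_compat; lra).
  assert (HKV : (1 + sigma) * K = 6 * gamma * V) by (unfold K; rewrite <- HV2; field; lra).
  set (T := V * gamma * D + gamma^2 + CG * (D * K + K^2)).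
  assert (HT : 0 <= T) by (unfold T; nonneg).
  set (e2 := Rmin (Rmin 1 (1 / D)) (Rmin (mA / K) (V * gamma / (T + 1)))).
  set (C1 := 3 * CG * (D * K + K^2) / (V*V) + 3 * (V * gamma * D + gamma^2) / (V*V)).
  exists e2, K, (C1 + K * D + CW * K^2), (CE * (K^3 + D * K^2 + D^2 * K) + gamma^2 * B1 * K), B1.
  assert (He2 : 0 < e2).
  { unfold e2. apply Rmin_pos; apply Rmin_pos; try lra; apply Rdiv_lt_0_compat; nra. }
  assert (HC1 : 0 <= C1).
  { unfold C1. assert (0 < V * V) by nra. apply Rplus_le_le_0_compat; apply Rmult_le_pos; try (left; apply Rinv_0_lt_compat; auto); nonneg. }
  split; [auto|]. split; [auto|]. split; [nonneg|]. split; [nonneg|]. split; [auto|].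
  intros eps [He He2'] c2.
  assert (Hm1 := Rle_trans _ _ _ (Rlt_le _ _ He2') (Rmin_l _ _)).
  assert (Hm2 := Rle_trans _ _ _ (Rlt_le _ _ He2') (Rmin_r _ _)).
  assert (He1 : eps <= 1) by (apply Rle_trans with (1 := Hm1); apply Rmin_l).
  assert (HeD : eps <= 1 / D) by (apply Rle_trans with (1 := Hm1); apply Rmin_r).
  assert (HeK : eps <= mA / K) by (apply Rle_trans with (1 := Hm2); apply Rmin_l).
  assert (HeT : eps < V * gamma / (T + 1)).
  { apply Rlt_le_trans with (1 := He2'). unfold e2. eapply Rle_trans; [apply Rmin_r|]. apply Rmin_r. }
  set (d := 2 * V * gamma * eps + gamma^2 * eps^2).
  assert (Hc2 : c2 = 1 + sigma + d).
  { unfold c2, d. fold V. rewrite <- HV2. ring. }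
  assert (Hd0 : 0 <= d) by (unfold d; nonneg).
  assert (HdD : d <= D * eps).
  { unfold d, D. assert (gamma^2 * eps^2 <= gamma^2 * eps).
    { apply Rmult_le_compat_l; [nonneg|]. simpl. nra. }
    nra. }
  assert (HDe : D * eps <= 1).
  { apply Rmult_le_reg_l with (/D); [apply Rinv_0_lt_compat; lra|].
    rewrite <- Rmult_assoc, Rinv_l, Rmult_1_l by lra. unfold Rdiv in HeD. lra. }
  assert (Hd1 : d <= 1) by lra.
  assert (HKe : K * eps <= mA).
  { apply Rmult_le_reg_l with (/K); [apply Rinv_0_lt_compat; lra|].
    rewrite <- Rmult_assoc, Rinv_l, Rmult_1_l by lra. unfold Rdiv in HeK. lra. }
  assert (HTe : eps * (T + 1) < V * gamma).
  { apply Rmult_lt_reg_r with (/ (T+1)); [apply Rinv_0_lt_compat; lra|].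
    rewrite Rmult_assoc, Rinv_r by lra. unfold Rdiv in HeT. lra. }
  set (alpha := d * (1 + d) / 2).
  assert (Halpha : alpha - V * gamma * eps = V * gamma * eps * d + gamma^2 * eps^2 * (1 + d) / 2).
  { unfold alpha, d. field. }
  assert (Hal2 : Rabs (alpha - V * gamma * eps) <= (V * gamma * D + gamma^2) * eps^2).
  { rewrite Halpha. rewrite Rabs_pos_eq by nonneg.
    assert (V * gamma * eps * d <= V * gamma * D * eps^2).
    { replace (V * gamma * D * eps^2) with (V * gamma * eps * (D * eps)) by ring.
      apply Rmult_le_compat_l; [nonneg|auto]. }
    assert (gamma^2 * eps^2 * (1 + d) / 2 <= gamma^2 * eps^2).
    { assert (0 <= gamma^2 * eps^2) by nonneg. nra. }
    nra. }
  split.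
  - intros m0 Hm0 HG0 HGp.
    assert (HmK : m0 <= K * eps).
    { destruct (Rle_lt_dec m0 (K * eps)) as [H|H]; [exact H|exfalso].
      set (y := K * eps).
      assert (Hy0 : 0 < y) by (unfold y; nra).
      specialize (HGp y (conj Hy0 H)).
      assert (Hy1 : y <= mA) by (unfold y; lra).
      destruct (HX y d) as [HA _]; [split; lra | split; lra |].
      rewrite <- Hc2 in HA. fold alpha in HA.
      apply Rabs_le_between in HA.
      assert (Hy3 : (1 + sigma) * y / 3 = 2 * V * gamma * eps).
      { unfold y. replace ((1 + sigma) * (K * eps) / 3) with ((1 + sigma) * K * eps / 3) by field.
        rewrite HKV. field. }
      rewrite Hy3 in HA.
      assert (Hdy : d * y <= D * K * eps^2).
      { unfold y. replace (D * K * eps^2) with ((D * eps) * (K * eps)) by ring.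
        apply Rmult_le_compat_r; [nra|lra]. }
      assert (Hyy : y^2 = K^2 * eps^2) by (unfold y; ring).
      assert (Hbr : alpha - 2 * V * gamma * eps + CG * (d * y + y^2) < 0).
      { assert (CG * (d * y + y^2) <= CG * (D * K + K^2) * eps^2).
        { replace (CG * (D * K + K^2) * eps^2) with (CG * (D * K * eps^2 + K^2 * eps^2)) by ring.
          apply Rmult_le_compat_l; [auto|]. lra. }
        apply Rabs_le_between in Hal2.
        assert (eps * eps * (T + 1) < V * gamma * eps) by nra.
        unfold T in *. nra. }
      assert (Hy2 : 0 < y^2) by (apply pow_lt; lra).
      assert (y^2 * (alpha - 2 * V * gamma * eps + CG * (d * y + y^2)) < 0) by nra.
      assert (CG * (d * y^3 + y^4) = y^2 * (CG * (d * y + y^2))) by ring.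
      nra. }
    split; [exact HmK|].
    destruct (HX m0 d) as [HA [_ [HW _]]]; [split; lra | split; lra |].
    rewrite <- Hc2 in HA, HW. fold alpha in HA. rewrite HG0 in HA.
    assert (Hm02 : 0 < m0^2) by (apply pow_lt; lra).
    assert (HA' : Rabs (alpha - (1 + sigma) * m0 / 3) <= CG * (D * K + K^2) * eps^2).
    { replace (0 - m0 ^ 2 * (alpha - (1 + sigma) * m0 / 3)) with (- (m0^2 * (alpha - (1 + sigma) * m0 / 3))) in HA by ring.
      rewrite Rabs_Ropp, Rabs_mult, (Rabs_pos_eq (m0^2)) in HA by lra.
      replace (CG * (d * m0 ^ 3 + m0 ^ 4)) with (m0^2 * (CG * (d * m0 + m0^2))) in HA by ring.
      apply Rmult_le_reg_l in HA; [|lra].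
      apply Rle_trans with (1 := HA).
      replace (CG * (D * K + K^2) * eps^2) with (CG * ((D * eps) * (K * eps) + (K * eps)^2)) by ring.
      apply Rmult_le_compat_l; [auto|].
      assert (d * m0 <= (D * eps) * (K * eps)) by (apply Rmult_le_compat; lra).
      assert (m0^2 <= (K * eps)^2) by (apply pow_incr; lra).
      lra. }
    assert (HVV : 0 < V * V) by nra.
    assert (Hm0c : Rabs (m0 - 3 * gamma * eps / V) <= C1 * eps^2).
    { replace (m0 - 3 * gamma * eps / V) with
        (- (3 / (V*V)) * (alpha - (1 + sigma) * m0 / 3) + (3 / (V*V)) * (alpha - V * gamma * eps)).
      2:{ rewrite <- HV2. field. lra. }
      eapply Rle_trans; [apply Rabs_triang|].
      rewrite !Rabs_mult, Rabs_Ropp, Rabs_pos_eq by (apply Rdiv_le_0_compat; lra).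
      unfold C1.
      assert (3 / (V*V) * Rabs (alpha - (1 + sigma) * m0 / 3) <= 3 / (V*V) * (CG * (D * K + K^2) * eps^2)).
      { apply Rmult_le_compat_l; [apply Rdiv_le_0_compat; lra| auto]. }
      assert (3 / (V*V) * Rabs (alpha - V * gamma * eps) <= 3 / (V*V) * ((V * gamma * D + gamma^2) * eps^2)).
      { apply Rmult_le_compat_l; [apply Rdiv_le_0_compat; lra| auto]. }
      replace ((3 * CG * (D * K + K ^ 2) / (V * V) + 3 * (V * gamma * D + gamma ^ 2) / (V * V)) * eps ^ 2)
        with (3 / (V*V) * (CG * (D * K + K^2) * eps^2) + 3 / (V*V) * ((V * gamma * D + gamma^2) * eps^2)) by (field; lra).
      lra. }
    assert (HW' : Rabs (Phi c2 sigma m0 - m0) <= (K * D + CW * K^2) * eps^2).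
    { apply Rle_trans with (1 := HW).
      assert (m0 * d <= (K * eps) * (D * eps)) by (apply Rmult_le_compat; lra).
      assert (CW * m0^2 <= CW * (K * eps)^2) by (apply Rmult_le_compat_l; [auto|]; apply pow_incr; lra).
      nra. }
    replace (Phi c2 sigma m0 / eps - 3 * gamma / V) with
      (((Phi c2 sigma m0 - m0) + (m0 - 3 * gamma * eps / V)) / eps) by (field; lra).
    unfold Rdiv at 1. rewrite Rabs_mult, Rabs_inv, (Rabs_pos_eq eps) by lra.
    apply Rmult_le_reg_r with eps; [lra|].
    rewrite Rmult_assoc, Rinv_l, Rmult_1_r by lra.
    eapply Rle_trans; [apply Rabs_triang|].
    nra.
  - intros m Hm.
    destruct (HX m d) as [_ [HE [_ HB]]]; [split; lra | split; lra |].
    rewrite <- Hc2 in HE, HB.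
    assert (HBm : Rabs (Phi c2 sigma m) <= B1 * K * eps).
    { apply Rle_trans with (1 := HB). rewrite Rmult_assoc. apply Rmult_le_compat_l; lra. }
    split; [|exact HBm].
    replace (exp (Phi c2 sigma m) - 1 - m - 2 * V * gamma * eps * Phi c2 sigma m + (1 + sigma) * Phi c2 sigma m ^ 2)
      with ((exp (Phi c2 sigma m) - 1 - m - d * Phi c2 sigma m + (1 + sigma) * Phi c2 sigma m ^ 2) + (gamma^2 * eps^2) * Phi c2 sigma m)
      by (unfold d; fold V; ring).
    eapply Rle_trans; [apply Rabs_triang|].
    rewrite (Rabs_mult (gamma^2 * eps^2)), (Rabs_pos_eq (gamma^2 * eps^2)) by nonneg.
    assert (H1 : CE * (m^3 + d * m^2 + d^2 * m) <= CE * (K^3 + D * K^2 + D^2 * K) * eps^3).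
    { replace (CE * (K^3 + D * K^2 + D^2 * K) * eps^3) with
        (CE * ((K*eps)^3 + (D*eps) * (K*eps)^2 + (D*eps)^2 * (K*eps))) by ring.
      apply Rmult_le_compat_l; [auto|].
      assert (m^3 <= (K*eps)^3) by (apply pow_incr; lra).
      assert (m^2 <= (K*eps)^2) by (apply pow_incr; lra).
      assert (d^2 <= (D*eps)^2) by (apply pow_incr; lra).
      assert (d * m^2 <= (D*eps) * (K*eps)^2) by (apply Rmult_le_compat; nonneg).
      assert (d^2 * m <= (D*eps)^2 * (K*eps)) by (apply Rmult_le_compat; nonneg).
      lra. }
    assert (H2 : gamma^2 * eps^2 * Rabs (Phi c2 sigma m) <= gamma^2 * B1 * K * eps^3).
    { replace (gamma^2 * B1 * K * eps^3) with (gamma^2 * eps^2 * (B1 * K * eps)) by ring.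
      apply Rmult_le_compat_l; [nonneg|auto]. }
    nra.
Qed.

Section KdV.
Variables sigma gamma : R.
Hypothesis Hs : 0 <= sigma.
Hypothesis Hg : 0 < gamma.

Definition VV := Vspeed sigma.
Definition kk := sqrt (VV * gamma / 2).
Definition AA := 3 * gamma / VV.
Definition pK (x : R) := exp (kk * x) + exp (- (kk * x)).
Definition nK1 (x : R) := - 8 * AA * kk * (exp (kk * x) - exp (- (kk * x))) / (pK x)^3.

Lemma VV_pos : 1 <= VV. Proof. apply V_ge1; auto. Qed.
Lemma kk_sq : kk * kk = VV * gamma / 2.
Proof. unfold kk. apply sqrt_sqrt. generalize VV_pos. nra. Qed.

Lemma pK_ge2 x : 2 <= pK x.
Proof.
  unfold pK. rewrite exp_Ropp. set (E := exp (kk * x)).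
  assert (HE : 0 < E) by apply exp_pos.
  assert (E + / E - 2 = (E - 1)^2 / E) by (field; lra).
  assert (0 <= (E - 1)^2 / E) by (apply Rdiv_le_0_compat; [apply pow2_ge_0|lra]).
  lra.
Qed.

Lemma nK_eq x : n_KdV sigma gamma x = 4 * AA / (pK x)^2.
Proof.
  assert (H := pK_ge2 x). assert (HV := VV_pos).
  unfold n_KdV, sech, cosh, AA. unfold pK in *. unfold kk, VV in *.
  field. split; lra.
Qed.

Lemma dK1 x : is_derive (n_KdV sigma gamma) x (nK1 x).
Proof.
  apply is_derive_ext with (f := fun x => 4 * AA / (exp (kk * x) + exp (- (kk * x)))^2).
  { intros t. rewrite nK_eq. reflexivity. }
  assert (H2 := pK_ge2 x). unfold pK in H2.
  auto_derive; [intro Hc; nra|]. unfold nK1, pK. field. lra.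
Qed.

Lemma dK2 x : is_derive nK1 x (2 * VV * gamma * n_KdV sigma gamma x - (VV * VV) * (n_KdV sigma gamma x)^2).
Proof.
  unfold nK1, pK.
  assert (H2 := pK_ge2 x). unfold pK in H2.
  auto_derive; [repeat apply Rmult_integral_contrapositive_currified; lra|]. rewrite nK_eq. unfold pK.
  rewrite !exp_Ropp in *. set (E := exp (kk * x)) in *.
  assert (HE : 0 < E) by (unfold E; apply exp_pos).
  assert (Hp : 0 < E + / E) by lra.
  assert (HV := VV_pos).
  transitivity (16 * AA * (kk * kk) / (E + / E)^2 - 96 * AA * (kk * kk) / (E + / E)^4).
  - field. split; [lra|nra].
  - rewrite kk_sq. unfold AA. field. split; [lra|split; [lra|nra]].
Qed.

Lemma K1_0 : nK1 0 = 0.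
Proof. unfold nK1. rewrite Rmult_0_r, Ropp_0. unfold Rdiv. ring. Qed.

Lemma K_0 : n_KdV sigma gamma 0 = AA.
Proof. rewrite nK_eq. unfold pK. rewrite Rmult_0_r, Ropp_0, exp_0. field. Qed.

Lemma K_bnd x : 0 <= n_KdV sigma gamma x <= AA.
Proof.
  rewrite nK_eq. assert (H2 := pK_ge2 x).
  assert (HA : 0 < AA) by (unfold AA; generalize VV_pos; intros; apply Rdiv_lt_0_compat; lra).
  assert (4 <= pK x ^ 2) by nra.
  split.
  - apply Rdiv_le_0_compat; nra.
  - apply Rmult_le_reg_r with (pK x ^ 2); [nra|].
    unfold Rdiv. rewrite Rmult_assoc, Rinv_l by nra. nra.
Qed.

End KdV.

Lemma gronwall2 (W W1 W2 : R -> R) (L beta : R) :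
  0 <= L -> 0 <= beta ->
  (forall x, 0 <= x -> is_derive W x (W1 x)) ->
  (forall x, 0 <= x -> is_derive W1 x (W2 x)) ->
  (forall x, 0 <= x -> Rabs (W2 x) <= L * Rabs (W x) + beta) ->
  forall x, 0 <= x ->
    W x ^ 2 + W1 x ^ 2 <= (W 0 ^ 2 + W1 0 ^ 2 + beta ^ 2 / (2 + L)) * exp ((2 + L) * x).
Proof.
  intros HL Hb HW HW1 HW2 x Hx.
  set (M := 2 + L).
  assert (HM : 0 < M) by (unfold M; lra).
  set (H := fun t => (W t ^ 2 + W1 t ^ 2 + beta ^ 2 / M) * exp (- (M * t))).
  set (dH := fun t => (2 * W t * W1 t + 2 * W1 t * W2 t - M * (W t ^ 2 + W1 t ^ 2 + beta ^ 2 / M)) * exp (- (M * t))).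
  assert (HdH : forall t, 0 <= t -> is_derive H t (dH t)).
  { intros t Ht. unfold H, dH.
    assert (D1 := HW t Ht). assert (D2 := HW1 t Ht).
    auto_derive.
    - repeat split; first [exists (W1 t); exact D1 | exists (W2 t); exact D2].
    - change (Derive (fun x0 => W x0) t) with (Derive W t).
      change (Derive (fun x0 => W1 x0) t) with (Derive W1 t).
      rewrite (is_derive_unique W t (W1 t) D1), (is_derive_unique W1 t (W2 t) D2).
      field. lra. }
  assert (Hneg : forall t, 0 <= t -> dH t <= 0).
  { intros t Ht. unfold dH.
    assert (Hp : 0 < exp (- (M * t))) by apply exp_pos.
    cut (2 * W t * W1 t + 2 * W1 t * W2 t - M * (W t ^ 2 + W1 t ^ 2 + beta ^ 2 / M) <= 0); [nra|].
    specialize (HW2 t Ht).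
    assert (E1 : W1 t * W2 t <= Rabs (W1 t) * (L * Rabs (W t) + beta)).
    { apply Rle_trans with (Rabs (W1 t * W2 t)); [apply Rle_abs|]. rewrite Rabs_mult.
      apply Rmult_le_compat_l; [apply Rabs_pos|auto]. }
    assert (E2 : Rabs (W t) ^ 2 = W t ^ 2) by apply pow2_abs.
    assert (E3 : Rabs (W1 t) ^ 2 = W1 t ^ 2) by apply pow2_abs.
    assert (E4 : 2 * Rabs (W1 t) * Rabs (W t) <= Rabs (W1 t) ^ 2 + Rabs (W t) ^ 2).
    { assert (0 <= (Rabs (W1 t) - Rabs (W t))^2) by apply pow2_ge_0. nra. }
    assert (E5 : 2 * Rabs (W1 t) * beta <= Rabs (W1 t) ^ 2 + beta ^ 2).
    { assert (0 <= (Rabs (W1 t) - beta)^2) by apply pow2_ge_0. nra. }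
    assert (E6 : 2 * W t * W1 t <= W t ^ 2 + W1 t ^ 2).
    { assert (0 <= (W t - W1 t)^2) by apply pow2_ge_0. nra. }
    assert (E7 : M * (W t ^ 2 + W1 t ^ 2 + beta ^ 2 / M) = M * (W t ^ 2 + W1 t ^ 2) + beta ^ 2) by (field; lra).
    rewrite E7. unfold M.
    assert (L * (2 * Rabs (W1 t) * Rabs (W t)) <= L * (Rabs (W1 t) ^ 2 + Rabs (W t) ^ 2)) by (apply Rmult_le_compat_l; auto).
    nra. }
  assert (Hmono : H x <= H 0).
  { destruct (mvt_ab H dH 0 x Hx) as [c [Hc Hc2]].
    - intros t Ht. apply HdH. lra.
    - assert (dH c <= 0) by (apply Hneg; lra). nra. }
  unfold H in Hmono. rewrite Rmult_0_r, Ropp_0, exp_0, Rmult_1_r in Hmono.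
  assert (Hex : exp (- (M * x)) * exp (M * x) = 1) by (rewrite <- exp_plus; replace (- (M * x) + M * x) with 0 by ring; apply exp_0).
  assert (Hp1 : 0 < exp (M * x)) by apply exp_pos.
  assert (Hp2 : 0 < exp (- (M * x))) by apply exp_pos.
  assert (0 <= beta ^ 2 / M) by (apply Rdiv_le_0_compat; [nra|lra]).
  apply Rle_trans with (W x ^ 2 + W1 x ^ 2 + beta ^ 2 / M); [lra|].
  replace (W x ^ 2 + W1 x ^ 2 + beta ^ 2 / M) with
    ((W x ^ 2 + W1 x ^ 2 + beta ^ 2 / M) * exp (- (M * x)) * exp (M * x)) by (rewrite Rmult_assoc, Hex; ring).
  fold M. apply Rmult_le_compat_r; lra.
Qed.

Lemma is_derive_lin (f g : R -> R) a x df dg : is_derive f x df -> is_derive g x dg ->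
  is_derive (fun y => f y / a - g y) x (df / a - dg).
Proof.
  intros Hf Hg. unfold Rdiv.
  apply (is_derive_minus (fun y => f y * / a) g x (df * / a) dg); auto.
  apply is_derive_ext with (f := fun y => / a * f y); [intros t; apply Rmult_comm|].
  replace (df * / a) with (scal (/ a) df) by (unfold scal; simpl; unfold mult; simpl; ring).
  apply is_derive_scal. exact Hf.
Qed.

Theorem proposition4p5 (sigma gamma : R) (hsigma : 0 <= sigma) (hgamma : 0 < gamma)
  (eps0 : R) (heps0 : 0 < eps0)
  (n u phi : R -> R -> R)
  (hsol : forall eps, 0 < eps -> eps < eps0 ->
            solitary_wave sigma gamma eps (n eps) (u eps) (phi eps)) :
  exists eps1 : R, 0 < eps1 /\
    forall xistar : R, 0 < xistar ->
      exists C : R, 0 < C /\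
        forall eps : R, 0 < eps -> eps < eps1 ->
          forall xi : R, 0 <= xi <= xistar ->
            let phiR := fun x => phi eps x - eps * n_KdV sigma gamma x in
            (Derive phiR xi) ^ 2 + (phiR xi) ^ 2 <= C * eps ^ 4.
Proof.
  destruct (stepAB sigma gamma hsigma hgamma) as (e2 & K & C0 & CB & B1 & He2 & HK & HC0 & HCB & HB1 & HAB).
  assert (HV1 : 1 <= VV sigma) by (apply VV_pos; auto).
  assert (HV2 : VV sigma * VV sigma = 1 + sigma) by (apply V_sq; auto).
  assert (HAA : 0 < AA sigma gamma) by (unfold AA; apply Rdiv_lt_0_compat; lra).
  exists (Rmin e2 eps0). split; [apply Rmin_pos; auto|].
  intros xistar Hxi.
  set (L := 2 * VV sigma * gamma + VV sigma * VV sigma * (B1 * K + AA sigma gamma)).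
  assert (HL : 0 <= L) by (unfold L; nonneg).
  set (M := 2 + L).
  assert (HM : 0 < M) by (unfold M; lra).
  set (C1 := C0 ^ 2 + CB ^ 2 / M).
  assert (HC1 : 0 <= C1) by (unfold C1; apply Rplus_le_le_0_compat; [nonneg|apply Rdiv_le_0_compat; [nonneg|lra]]).
  exists (C1 * exp (M * xistar) + 1).
  assert (Hexp : 0 < exp (M * xistar)) by apply exp_pos.
  split; [nra|].
  intros eps He Heps1 xi Hxi' phiR.
  assert (Heps0 : eps < eps0) by (apply Rlt_le_trans with (1 := Heps1); apply Rmin_r).
  assert (Heps2 : eps < e2) by (apply Rlt_le_trans with (1 := Heps1); apply Rmin_l).
  assert (Hsw := hsol eps He Heps0).
  set (N := n eps) in *. set (U := u eps) in *. set (F := phi eps) in *.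
  destruct (HAB eps (conj He Heps2)) as [HA HB].
  assert (Hc2 : (Vspeed sigma + gamma * eps) ^ 2 = (cc sigma gamma eps) ^ 2) by reflexivity.
  rewrite Hc2 in HA, HB.
  set (m0 := N 0 - 1).
  assert (Hm0 : 0 < m0) by (unfold m0; generalize (N_gt1 _ _ _ _ _ _ Hsw 0); lra).
  destruct (HA m0 Hm0 (G0 _ _ _ _ _ _ Hsw) (Gpos _ _ _ He _ _ _ Hsw)) as [HmK HW0].
  assert (Hm : forall x, 0 <= N x - 1 <= K * eps).
  { intros x. generalize (N_gt1 _ _ _ _ _ _ Hsw x) (N_le0 _ _ _ _ _ _ Hsw x). unfold m0 in HmK. lra. }
  set (V := VV sigma) in *.
  set (nK := n_KdV sigma gamma).
  set (W := fun x => F x / eps - nK x).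
  set (W1 := fun x => Derive F x / eps - nK1 sigma gamma x).
  set (W2 := fun x => Derive (Derive F) x / eps - (2 * V * gamma * nK x - (V * V) * (nK x)^2)).
  assert (DW : forall x, 0 <= x -> is_derive W x (W1 x)).
  { intros x _. unfold W, W1. apply is_derive_lin.
    - apply Derive_correct. apply (smooth_ex_derive F (sw_F _ _ _ _ _ _ Hsw)).
    - apply dK1; auto. }
  assert (DW1 : forall x, 0 <= x -> is_derive W1 x (W2 x)).
  { intros x _. unfold W1, W2. apply is_derive_lin.
    - apply Derive_correct. apply (smooth_ex_derive2 F (sw_F _ _ _ _ _ _ Hsw)).
    - apply dK2; auto. }
  assert (BW2 : forall x, 0 <= x -> Rabs (W2 x) <= L * Rabs (W x) + CB * eps).
  { intros x _.
    set (m := N x - 1).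
    destruct (HB m (Hm x)) as [HR HP].
    assert (HFx := F_Phi _ _ _ _ _ _ Hsw x). fold m in HFx. rewrite <- HFx in HR, HP.
    assert (HF2 := F2_rel _ _ _ _ _ _ Hsw x). fold m in HF2.
    set (psi := F x / eps). set (R := Derive (Derive F) x / eps - 2 * V * gamma * psi + V * V * psi ^ 2).
    assert (HRb : Rabs R <= CB * eps).
    { assert (HRe : R = (exp (F x) - 1 - m - 2 * Vspeed sigma * gamma * eps * F x + (1 + sigma) * F x ^ 2) / eps ^ 2).
      { unfold R, psi. rewrite <- HV2. change (Vspeed sigma) with V. apply Rmult_eq_reg_l with (eps ^ 2); [|apply pow_nonzero; lra].
        replace (eps ^ 2 * ((exp (F x) - 1 - m - 2 * V * gamma * eps * F x + V * V * F x ^ 2) / eps ^ 2))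
          with (exp (F x) - 1 - m - 2 * V * gamma * eps * F x + V * V * F x ^ 2) by (field; lra).
        rewrite <- HF2. field. lra. }
      rewrite HRe. unfold Rdiv. rewrite Rabs_mult, Rabs_inv, (Rabs_pos_eq (eps ^ 2)) by nonneg.
      apply Rmult_le_reg_r with (eps ^ 2); [apply pow_lt; lra|].
      rewrite Rmult_assoc, Rinv_l by (apply pow_nonzero; lra).
      replace (CB * eps * eps ^ 2) with (CB * eps ^ 3) by ring. lra. }
    assert (Hpsi : Rabs psi <= B1 * K).
    { unfold psi, Rdiv. rewrite Rabs_mult, Rabs_inv, (Rabs_pos_eq eps) by lra.
      apply Rmult_le_reg_r with eps; [lra|].
      rewrite Rmult_assoc, Rinv_l by lra. lra. }
    destruct (K_bnd sigma gamma hsigma hgamma x) as [HK0 HK1]. fold nK in HK0, HK1.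
    assert (HW2e : W2 x = R + (2 * V * gamma - V * V * (psi + nK x)) * W x).
    { unfold W2, R, W, psi. ring. }
    rewrite HW2e.
    assert (Hs : Rabs (psi + nK x) <= B1 * K + AA sigma gamma).
    { eapply Rle_trans; [apply Rabs_triang|]. rewrite (Rabs_pos_eq (nK x)) by lra. lra. }
    assert (Hc : Rabs (2 * V * gamma - V * V * (psi + nK x)) <= L).
    { eapply Rle_trans; [apply Rabs_triang|]. rewrite Rabs_Ropp, !Rabs_mult.
      rewrite (Rabs_pos_eq V), (Rabs_pos_eq gamma), (Rabs_pos_eq 2) by lra.
      unfold L. fold V. assert (0 <= V * V) by nra.
      assert (V * (V * Rabs (psi + nK x)) <= V * V * (B1 * K + AA sigma gamma)).
      { rewrite <- Rmult_assoc. apply Rmult_le_compat_l; auto. }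
      rewrite Rmult_assoc. lra. }
    eapply Rle_trans; [apply Rabs_triang|]. rewrite Rabs_mult.
    assert (Rabs (2 * V * gamma - V * V * (psi + nK x)) * Rabs (W x) <= L * Rabs (W x)).
    { apply Rmult_le_compat_r; auto; apply Rabs_pos. }
    lra. }
  assert (HG := gronwall2 W W1 W2 L (CB * eps) HL ltac:(nonneg) DW DW1 BW2 xi ltac:(lra)).
  fold M in HG.
  assert (HW0' : Rabs (W 0) <= C0 * eps).
  { unfold W. rewrite (F_Phi _ _ _ _ _ _ Hsw 0). fold m0.
    unfold nK. rewrite K_0 by auto. unfold AA, VV. exact HW0. }
  assert (HW10 : W1 0 = 0).
  { unfold W1. rewrite (even_Derive0 F (sw_evF _ _ _ _ _ _ Hsw) (smooth_ex_derive F (sw_F _ _ _ _ _ _ Hsw) 0)).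
    rewrite K1_0. field. lra. }
  assert (HW0sq : W 0 ^ 2 <= C0 ^ 2 * eps ^ 2).
  { rewrite <- pow2_abs. replace (C0 ^ 2 * eps ^ 2) with ((C0 * eps) ^ 2) by ring.
    apply pow_incr. split; [apply Rabs_pos|auto]. }
  rewrite HW10 in HG.
  assert (Hpr : forall x, phiR x = eps * W x).
  { intros x. unfold phiR, W, nK. fold F. field. lra. }
  assert (Hdpr : Derive phiR xi = eps * W1 xi).
  { apply is_derive_unique.
    apply is_derive_ext with (f := fun x => eps * W x); [intros; rewrite Hpr; reflexivity|].
    apply (is_derive_scal W xi eps (W1 xi)). apply DW. lra. }
  rewrite Hdpr, Hpr.
  assert (Hexm : exp ((2 + L) * xi) <= exp (M * xistar)).
  { fold M. destruct (Req_dec xi xistar) as [->|Hne]; [lra|]. left. apply exp_increasing.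
    apply Rmult_lt_compat_l; lra. }
  assert (HQ : W xi ^ 2 + W1 xi ^ 2 <= C1 * eps ^ 2 * exp (M * xistar)).
  { apply Rle_trans with (1 := HG).
    replace (C1 * eps ^ 2 * exp (M * xistar)) with ((C0 ^ 2 * eps ^ 2 + 0 ^ 2 + (CB * eps) ^ 2 / M) * exp (M * xistar)).
    2:{ unfold C1. field. lra. }
    apply Rmult_le_compat; [ | apply Rlt_le, exp_pos | | exact Hexm].
    - assert (0 <= W 0 ^ 2) by apply pow2_ge_0. assert (0 <= (CB*eps)^2/M) by nonneg. assert (0 ^ 2 = 0) by ring. lra.
    - assert (0 ^ 2 = 0) by ring. lra. }
  assert (0 <= eps ^ 4) by nonneg.
  replace ((eps * W1 xi) ^ 2 + (eps * W xi) ^ 2) with (eps ^ 2 * (W xi ^ 2 + W1 xi ^ 2)) by ring.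
  apply Rle_trans with (eps ^ 2 * (C1 * eps ^ 2 * exp (M * xistar))).
  - apply Rmult_le_compat_l; [nonneg|auto].
  - replace (eps ^ 2 * (C1 * eps ^ 2 * exp (M * xistar))) with (C1 * exp (M * xistar) * eps ^ 4) by ring.
    lra.
Qed.
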